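(* Given a Spherical Diagram $\mathcal D$, every great circle on the unit sphere is crossed by at least three distinct arcs of $\mathcal D$.
   Context: A geodesic arc on the unit sphere in $\mathbb R^3$ is the unique shortest curve joining two non-antipodal points. An arc $a$ blocks an arc $b$ (equivalently, $b$ hits $a$) if an endpoint of $b$ lies in the relative interior of $a$. A Spherical Diagram (SD) is a finite non-empty collection $\mathcal D$ of pairwise interior-disjoint geodesic arcs on the unit sphere such that each arc of $\mathcal D$ is blocked by arcs of $\mathcal D$ at each of its endpoints. An arc $a$ crosses a curve $\gamma$ if $a\cap\gamma$ contains an isolated point $x$ in the relative interior of $a$ such that every neighborhood of $x$ contains points of $\gamma$ on both sides of $a$. *)

(* Defs.v *)
From Stdlib Require Import Reals List.
Open Scope R_scope.

Record V3 := mkV { vx : R; vy : R; vz : R }.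

Definition vzero : V3 := mkV 0 0 0.
Definition vadd (u v : V3) : V3 := mkV (vx u + vx v) (vy u + vy v) (vz u + vz v).
Definition vscale (c : R) (u : V3) : V3 := mkV (c * vx u) (c * vy u) (c * vz u).
Definition vopp (u : V3) : V3 := mkV (- vx u) (- vy u) (- vz u).
Definition vsub (u v : V3) : V3 := vadd u (vopp v).
Definition dot (u v : V3) : R := vx u * vx v + vy u * vy v + vz u * vz v.
Definition cross (u v : V3) : V3 :=
  mkV (vy u * vz v - vz u * vy v) (vz u * vx v - vx u * vz v) (vx u * vy v - vy u * vx v).
Definition dist (u v : V3) : R := sqrt (dot (vsub u v) (vsub u v)).

Definition on_sphere (x : V3) : Prop := dot x x = 1.

Record arc := mkArc { ep1 : V3; ep2 : V3 }.

Definition valid_arc (a : arc) : Prop :=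
  on_sphere (ep1 a) /\ on_sphere (ep2 a) /\ ep1 a <> ep2 a /\ ep1 a <> vopp (ep2 a).

(* points of the (minor, i.e. shortest) geodesic arc: unit vectors in the cone
   spanned by the two endpoints *)
Definition in_arc (a : arc) (x : V3) : Prop :=
  on_sphere x /\ exists al be, 0 <= al /\ 0 <= be /\
    x = vadd (vscale al (ep1 a)) (vscale be (ep2 a)).

Definition in_relint (a : arc) (x : V3) : Prop :=
  on_sphere x /\ exists al be, 0 < al /\ 0 < be /\
    x = vadd (vscale al (ep1 a)) (vscale be (ep2 a)).

Definition blocks (a b : arc) : Prop := in_relint a (ep1 b) \/ in_relint a (ep2 b).

Definition spherical_diagram (D : list arc) : Prop :=
  D <> nil /\
  (forall a, In a D -> valid_arc a) /\
  (forall a b, In a D -> In b D -> a <> b ->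
     forall x, ~ (in_relint a x /\ in_relint b x)) /\
  (forall b, In b D ->
     (exists a, In a D /\ in_relint a (ep1 b)) /\
     (exists a, In a D /\ in_relint a (ep2 b))).

(* the great circle with (nonzero) normal vector n *)
Definition on_gc (n x : V3) : Prop := on_sphere x /\ dot n x = 0.

(* arc a crosses the great circle with normal n: a /\ gamma contains an isolated
   point x in the relative interior of a such that every neighbourhood of x
   contains points of gamma on both sides of a (sides of the great circle
   through a, i.e. the sign of  (ep1 a x ep2 a) . y). *)
Definition crosses (a : arc) (n : V3) : Prop :=
  exists x, in_relint a x /\ on_gc n x /\
    (exists eps, 0 < eps /\ forall y, in_arc a y -> on_gc n y -> dist y x < eps -> y = x) /\
    (forall eps, 0 < eps ->
       (exists y, on_gc n y /\ dist y x < eps /\ dot (cross (ep1 a) (ep2 a)) y > 0) /\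
       (exists y, on_gc n y /\ dist y x < eps /\ dot (cross (ep1 a) (ep2 a)) y < 0)).

(* Main.v *)
Require Import Defs.
From Stdlib Require Import Reals List Lra Classical.
Open Scope R_scope.

Lemma sq_nonneg x : 0 <= x * x.
Proof. nra. Qed.

Lemma veq (u v : V3) : vx u = vx v -> vy u = vy v -> vz u = vz v -> u = v.
Proof. destruct u, v; simpl; intros; subst; reflexivity. Qed.

Lemma dot_vadd_l u v w : dot (vadd u v) w = dot u w + dot v w.
Proof. destruct u, v, w; unfold dot, vadd; simpl; ring. Qed.
Lemma dot_vadd_r u v w : dot w (vadd u v) = dot w u + dot w v.
Proof. destruct u, v, w; unfold dot, vadd; simpl; ring. Qed.
Lemma dot_vscale_l c u w : dot (vscale c u) w = c * dot u w.
Proof. destruct u, w; unfold dot, vscale; simpl; ring. Qed.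
Lemma dot_vscale_r c u w : dot w (vscale c u) = c * dot w u.
Proof. destruct u, w; unfold dot, vscale; simpl; ring. Qed.
Lemma dot_vsub_l u v w : dot (vsub u v) w = dot u w - dot v w.
Proof. destruct u, v, w; unfold dot, vsub, vadd, vopp; simpl; ring. Qed.
Lemma dot_vsub_r u v w : dot w (vsub u v) = dot w u - dot w v.
Proof. destruct u, v, w; unfold dot, vsub, vadd, vopp; simpl; ring. Qed.
Lemma dot_vopp_l u w : dot (vopp u) w = - dot u w.
Proof. destruct u, w; unfold dot, vopp; simpl; ring. Qed.
Lemma dot_vopp_r u w : dot w (vopp u) = - dot w u.
Proof. destruct u, w; unfold dot, vopp; simpl; ring. Qed.
Lemma dot_comm u v : dot u v = dot v u.
Proof. destruct u, v; unfold dot; simpl; ring. Qed.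

Hint Rewrite dot_vadd_l dot_vadd_r dot_vscale_l dot_vscale_r dot_vsub_l dot_vsub_r
  dot_vopp_l dot_vopp_r : dotdb.

Lemma dot_self_nonneg u : 0 <= dot u u.
Proof. destruct u; unfold dot; simpl; nra. Qed.

Lemma dot_self_pos u : u <> vzero -> 0 < dot u u.
Proof.
  intro H. destruct u as [a b c]; unfold dot; simpl.
  destruct (Req_dec a 0); destruct (Req_dec b 0); destruct (Req_dec c 0); subst; try nra.
  exfalso; apply H; reflexivity.
Qed.

Lemma dot_self_zero u : dot u u = 0 -> u = vzero.
Proof.
  intro H. destruct (classic (u = vzero)) as [h|h]; auto.
  apply dot_self_pos in h; lra.
Qed.

Lemma cross_cross v a b :
  cross v (cross a b) = vsub (vscale (dot v b) a) (vscale (dot v a) b).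
Proof. destruct v, a, b; apply veq; unfold cross, dot, vsub, vadd, vscale, vopp; simpl; ring. Qed.

Lemma lagrange u v : dot (cross u v) (cross u v) = dot u u * dot v v - dot u v * dot u v.
Proof. destruct u, v; unfold cross, dot; simpl; ring. Qed.

Lemma binet a b c d : dot (cross a b) (cross c d) = dot a c * dot b d - dot a d * dot b c.
Proof. destruct a, b, c, d; unfold cross, dot; simpl; ring. Qed.

Lemma cross_perp_l a b : dot (cross a b) a = 0.
Proof. destruct a, b; unfold cross, dot; simpl; ring. Qed.
Lemma cross_perp_r a b : dot (cross a b) b = 0.
Proof. destruct a, b; unfold cross, dot; simpl; ring. Qed.

Lemma valid_k a : valid_arc a -> -1 < dot (ep1 a) (ep2 a) < 1.
Proof.
  intros [h1 [h2 [h3 h4]]]. unfold on_sphere in *.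
  assert (A : vsub (ep1 a) (ep2 a) <> vzero).
  { intro E. apply h3. destruct (ep1 a), (ep2 a); unfold vsub, vadd, vopp, vzero in E;
    simpl in E; injection E; intros; apply veq; simpl; lra. }
  assert (B : vadd (ep1 a) (ep2 a) <> vzero).
  { intro E. apply h4. destruct (ep1 a), (ep2 a); unfold vadd, vopp, vzero in E;
    simpl in E; injection E; intros; apply veq; simpl; lra. }
  apply dot_self_pos in A; apply dot_self_pos in B.
  autorewrite with dotdb in A, B. rewrite (dot_comm (ep2 a) (ep1 a)) in A, B. lra.
Qed.

Lemma comb_pos (e1 e2 : V3) A B : dot e1 e1 = 1 -> dot e2 e2 = 1 -> -1 < dot e1 e2 ->
  0 < A -> 0 < B -> 0 < dot (vadd (vscale A e1) (vscale B e2)) (vadd (vscale A e1) (vscale B e2)).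
Proof.
  intros h1 h2 hk hA hB. autorewrite with dotdb. rewrite (dot_comm e2 e1), h1, h2.
  assert (0 < A * B * (1 + dot e1 e2)) by (apply Rmult_lt_0_compat; [nra|lra]).
  pose proof (sq_nonneg (A - B)). nra.
Qed.

Lemma endpoint_not_relint a : valid_arc a ->
  ~ in_relint a (ep1 a) /\ ~ in_relint a (ep2 a).
Proof.
  intros hv. pose proof (valid_k a hv) as hk. destruct hv as [h1 [h2 _]].
  unfold on_sphere in *.
  split; intros [_ [al [be [ha [hb E]]]]].
  - assert (E1 : dot (ep1 a) (ep1 a) = dot (vadd (vscale al (ep1 a)) (vscale be (ep2 a))) (ep1 a)) by (rewrite <- E; reflexivity).
    assert (E2 : dot (ep1 a) (ep2 a) = dot (vadd (vscale al (ep1 a)) (vscale be (ep2 a))) (ep2 a)) by (rewrite <- E; reflexivity).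
    autorewrite with dotdb in E1, E2. rewrite (dot_comm (ep2 a) (ep1 a)) in E1.
    rewrite h1, h2 in *. set (k := dot (ep1 a) (ep2 a)) in *.
    assert (be * (1 - k * k) = 0) by nra.
    assert (0 < 1 - k * k) by nra. nra.
  - assert (E1 : dot (ep2 a) (ep1 a) = dot (vadd (vscale al (ep1 a)) (vscale be (ep2 a))) (ep1 a)) by (rewrite <- E; reflexivity).
    assert (E2 : dot (ep2 a) (ep2 a) = dot (vadd (vscale al (ep1 a)) (vscale be (ep2 a))) (ep2 a)) by (rewrite <- E; reflexivity).
    autorewrite with dotdb in E1, E2. rewrite !(dot_comm (ep2 a) (ep1 a)) in *.
    rewrite h1, h2 in *. set (k := dot (ep1 a) (ep2 a)) in *.
    assert (al * (1 - k * k) = 0) by nra.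
    assert (0 < 1 - k * k) by nra. nra.
Qed.

Lemma vsub_zero r X : vsub r X = vzero -> r = X.
Proof. destruct r, X; unfold vsub, vadd, vopp, vzero; intro E; injection E; intros; apply veq; simpl; lra. Qed.

Lemma span_lemma e1 e2 u r : dot e1 e1 = 1 -> dot e2 e2 = 1 -> -1 < dot e1 e2 < 1 ->
  u <> vzero -> dot u e1 = 0 -> dot u e2 = 0 -> dot r u = 0 ->
  exists g d, r = vadd (vscale g e1) (vscale d e2).
Proof.
  intros h1 h2 hk hu hu1 hu2 hr.
  set (k := dot e1 e2) in *.
  assert (hk2 : 0 < 1 - k * k) by nra.
  set (g := (dot r e1 - k * dot r e2) / (1 - k * k)).
  set (d := (dot r e2 - k * dot r e1) / (1 - k * k)).
  exists g, d.
  set (v := vsub r (vadd (vscale g e1) (vscale d e2))).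
  assert (hv1 : dot v e1 = 0).
  { unfold v; autorewrite with dotdb. rewrite h1, (dot_comm e2 e1). fold k.
    unfold g, d. field. lra. }
  assert (hv2 : dot v e2 = 0).
  { unfold v; autorewrite with dotdb. rewrite h2. fold k.
    unfold g, d. field. lra. }
  assert (hvu : dot v u = 0).
  { unfold v; autorewrite with dotdb. rewrite hr, (dot_comm e1 u), (dot_comm e2 u), hu1, hu2. ring. }
  set (W := cross e1 e2).
  assert (hWW : dot W W = 1 - k * k).
  { unfold W. rewrite binet, h1, h2, (dot_comm e2 e1). fold k. ring. }
  assert (cv : dot (cross v W) (cross v W) = 0).
  { unfold W at 1 2. rewrite cross_cross, hv1, hv2. autorewrite with dotdb. ring. }
  assert (cu : dot (cross u W) (cross u W) = 0).
  { unfold W at 1 2. rewrite cross_cross, hu1, hu2. autorewrite with dotdb. ring. }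
  assert (cvu : dot (cross v W) (cross u W) = 0).
  { unfold W at 1. rewrite cross_cross, hv1, hv2. autorewrite with dotdb. ring. }
  rewrite lagrange in cv, cu. rewrite binet in cvu.
  rewrite hvu in cvu.
  pose proof (dot_self_pos u hu) as hpu.
  assert (huW : dot u W <> 0).
  { intro E. rewrite E in cu. nra. }
  assert (hvW : dot v W = 0).
  { rewrite (dot_comm W u) in cvu. apply (Rmult_eq_reg_r (dot u W)); [|exact huW]. lra. }
  assert (hvv : dot v v = 0) by (rewrite hvW in cv; nra).
  apply dot_self_zero in hvv. apply vsub_zero in hvv. exact hvv.
Qed.

Lemma small_coef al be g d : 0 < al -> 0 < be ->
  exists t, 0 < t /\ 0 < al + t * g /\ 0 < be + t * d.
Proof.
  intros ha hb.
  set (mn := Rmin al be).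
  assert (hm : 0 < mn) by (unfold mn; apply Rmin_pos; lra).
  assert (hma : mn <= al) by apply Rmin_l.
  assert (hmb : mn <= be) by apply Rmin_r.
  pose proof (Rabs_pos g). pose proof (Rabs_pos d).
  pose proof (Rle_abs (-g)) as hg; rewrite Rabs_Ropp in hg.
  pose proof (Rle_abs (-d)) as hd; rewrite Rabs_Ropp in hd.
  set (t := mn / (1 + Rabs g + Rabs d)).
  assert (ht : t * (1 + Rabs g + Rabs d) = mn) by (unfold t; field; lra).
  assert (htp : 0 < t) by (unfold t; apply Rdiv_lt_0_compat; lra).
  exists t. split; [exact htp|]. split; nra.
Qed.

Lemma overlap_core a u q r : valid_arc a -> u <> vzero ->
  dot u (ep1 a) = 0 -> dot u (ep2 a) = 0 -> dot r u = 0 -> in_relint a q ->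
  exists x s t, 0 < s /\ 0 < t /\ x = vadd (vscale s q) (vscale t r) /\ in_relint a x.
Proof.
  intros hv hu hu1 hu2 hr [hq [al [be [ha [hb Eq]]]]].
  pose proof (valid_k a hv) as hk. destruct hv as [h1 [h2 _]]. unfold on_sphere in *.
  destruct (span_lemma (ep1 a) (ep2 a) u r h1 h2 hk hu hu1 hu2 hr) as [g [d Er]].
  destruct (small_coef al be g d ha hb) as [t [ht [hA hB]]].
  set (x0 := vadd (vscale (al + t * g) (ep1 a)) (vscale (be + t * d) (ep2 a))).
  assert (hx0 : 0 < dot x0 x0) by (apply comb_pos; lra).
  set (S := sqrt (dot x0 x0)).
  assert (hS : 0 < S) by (apply sqrt_lt_R0; lra).
  assert (hSS : S * S = dot x0 x0) by (apply sqrt_sqrt; lra).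
  exists (vscale (/ S) x0), (/ S), (t / S).
  split; [apply Rinv_0_lt_compat; lra|].
  split; [apply Rdiv_lt_0_compat; lra|].
  split.
  { subst q r. unfold x0. apply veq; unfold vadd, vscale; simpl; field; lra. }
  split.
  { unfold on_sphere. autorewrite with dotdb. rewrite <- hSS. field. lra. }
  exists ((al + t * g) / S), ((be + t * d) / S).
  split; [apply Rdiv_lt_0_compat; lra|].
  split; [apply Rdiv_lt_0_compat; lra|].
  unfold x0. apply veq; unfold vadd, vscale; simpl; field; lra.
Qed.

Lemma overlap D a b u : spherical_diagram D -> In a D -> In b D -> u <> vzero ->
  dot u (ep1 a) = 0 -> dot u (ep2 a) = 0 -> dot u (ep1 b) = 0 -> dot u (ep2 b) = 0 ->
  in_relint a (ep1 b) \/ in_relint a (ep2 b) -> False.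
Proof.
  intros HD ha hb hu h1 h2 h3 h4 hrel.
  destruct HD as [_ [Hval [Hdisj _]]].
  assert (hab : a <> b).
  { intro E; subst b. destruct (endpoint_not_relint a (Hval a ha)). tauto. }
  destruct hrel as [hr|hr].
  - destruct (overlap_core a u (ep1 b) (ep2 b) (Hval a ha) hu h1 h2) as [x [s [t [hs [ht [Ex hx]]]]]];
      [rewrite dot_comm; auto | auto |].
    apply (Hdisj a b ha hb hab x). split; auto.
    split; [destruct hx; auto|]. exists s, t. auto.
  - destruct (overlap_core a u (ep2 b) (ep1 b) (Hval a ha) hu h1 h2) as [x [s [t [hs [ht [Ex hx]]]]]];
      [rewrite dot_comm; auto | auto |].
    apply (Hdisj a b ha hb hab x). split; auto.
    split; [destruct hx; auto|]. exists t, s. split; auto. split; auto.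
    rewrite Ex. apply veq; unfold vadd, vscale; simpl; ring.
Qed.

Definition trans (n : V3) (a : arc) : Prop := dot n (ep1 a) * dot n (ep2 a) < 0.
Definition cdir (n : V3) (a : arc) : V3 :=
  vadd (vscale (Rabs (dot n (ep2 a))) (ep1 a)) (vscale (Rabs (dot n (ep1 a))) (ep2 a)).

Lemma prod_neg_cases x y : x * y < 0 -> (0 < x /\ y < 0) \/ (x < 0 /\ 0 < y).
Proof.
  intro h. destruct (Rtotal_order x 0) as [l|[e|g]].
  - right. split; auto. nra.
  - subst. lra.
  - left. split; auto. nra.
Qed.

Lemma n_cdir n a : trans n a -> dot n (cdir n a) = 0.
Proof.
  unfold trans, cdir; intro h. autorewrite with dotdb.
  destruct (prod_neg_cases _ _ h) as [[p q]|[p q]].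
  - rewrite (Rabs_right (dot n (ep1 a))), (Rabs_left (dot n (ep2 a))) by lra. ring.
  - rewrite (Rabs_left (dot n (ep1 a))), (Rabs_right (dot n (ep2 a))) by lra. ring.
Qed.

Lemma G0 D n w a3 q : In a3 D -> in_relint a3 q -> dot n q = 0 ->
  (forall a, In a D -> trans n a -> dot w (cdir n a) <= 0) ->
  dot w q <= 0 \/ (dot n (ep1 a3) = 0 /\ dot n (ep2 a3) = 0).
Proof.
  intros ha3 [_ [al [be [hal [hbe Eq]]]]] hnq Htr.
  subst q. autorewrite with dotdb in *.
  set (n1 := dot n (ep1 a3)) in *. set (n2 := dot n (ep2 a3)) in *.
  set (w1 := dot w (ep1 a3)). set (w2 := dot w (ep2 a3)).
  destruct (Rlt_or_le (n1 * n2) 0) as [ht|ht].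
  - left. specialize (Htr a3 ha3 ht). unfold cdir in Htr. autorewrite with dotdb in Htr.
    fold n1 n2 w1 w2 in Htr.
    destruct (prod_neg_cases _ _ ht) as [[p q]|[p q]].
    + rewrite (Rabs_right n1), (Rabs_left n2) in Htr by lra.
      assert (E : n1 * (al * w1 + be * w2) = be * (- n2 * w1 + n1 * w2)).
      { assert (HH : al * n1 = - be * n2) by lra.
        replace (n1 * (al * w1 + be * w2)) with ((al * n1) * w1 + n1 * be * w2) by ring.
        rewrite HH. ring. }
      assert (be * (- n2 * w1 + n1 * w2) <= 0).
      { nra. }
      nra.
    + rewrite (Rabs_left n1), (Rabs_right n2) in Htr by lra.
      assert (E : - n1 * (al * w1 + be * w2) = be * (n2 * w1 - n1 * w2)).
      { assert (HH : al * n1 = - be * n2) by lra.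
        replace (- n1 * (al * w1 + be * w2)) with (- (al * n1) * w1 - n1 * be * w2) by ring.
        rewrite HH. ring. }
      assert (be * (n2 * w1 - n1 * w2) <= 0) by nra.
      nra.
  - right.
    destruct (Req_dec n1 0) as [z|z].
    + rewrite z in *. split; auto. nra.
    + exfalso. assert (0 < n1 * n1) by nra.
      assert (al * (n1 * n1) + be * (n1 * n2) = 0) by nra.
      nra.
Qed.

Definition isEP (D : list arc) (q : V3) : Prop :=
  exists b, In b D /\ (q = ep1 b \/ q = ep2 b).

Lemma blocked D q : spherical_diagram D -> isEP D q -> exists a, In a D /\ in_relint a q.
Proof.
  intros [_ [_ [_ HB]]] [b [hb [E|E]]]; subst q; destruct (HB b hb) as [[a [x y]] [a' [x' y']]]; eauto.
Qed.

Lemma G D n w q : spherical_diagram D -> n <> vzero ->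
  (forall a, In a D -> trans n a -> dot w (cdir n a) <= 0) ->
  isEP D q -> dot n q = 0 -> dot w q <= 0.
Proof.
  intros HD hn Htr hq hnq.
  destruct (blocked D q HD hq) as [a3 [ha3 hr3]].
  destruct (G0 D n w a3 q ha3 hr3 hnq Htr) as [done|[z1 z2]]; [exact done|].
  assert (K : forall e, (e = ep1 a3 \/ e = ep2 a3) -> dot w e <= 0).
  { intros e he.
    assert (hep : isEP D e) by (exists a3; auto).
    assert (hne : dot n e = 0) by (destruct he; subst; auto).
    destruct (blocked D e HD hep) as [a4 [ha4 hr4]].
    destruct (G0 D n w a4 e ha4 hr4 hne Htr) as [d|[y1 y2]]; [exact d|].
    exfalso. apply (overlap D a4 a3 n HD ha4 ha3 hn y1 y2 z1 z2).
    destruct he; subst; auto. }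
  destruct hr3 as [_ [al [be [hal [hbe Eq]]]]]. subst q.
  autorewrite with dotdb.
  pose proof (K (ep1 a3) (or_introl eq_refl)). pose proof (K (ep2 a3) (or_intror eq_refl)).
  nra.
Qed.

Lemma claim D n w a p : spherical_diagram D ->
  (forall a, In a D -> trans n a -> dot w (cdir n a) <= 0) ->
  (forall q, isEP D q -> 0 <= dot n q -> dot w q <= 0) ->
  In a D -> in_relint a p -> 0 < dot n p -> dot w p = 0 ->
  dot w (ep1 a) = 0 /\ dot w (ep2 a) = 0.
Proof.
  intros HD Htr HEP ha [_ [al [be [hal [hbe Eq]]]]] hnp hwp.
  assert (K1 : 0 <= dot n (ep1 a) -> dot w (ep1 a) <= 0).
  { apply HEP. exists a; auto. }
  assert (K2 : 0 <= dot n (ep2 a) -> dot w (ep2 a) <= 0).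
  { apply HEP. exists a; auto. }
  pose proof (Htr a ha) as Ht. unfold trans, cdir in Ht.
  subst p. autorewrite with dotdb in *.
  set (n1 := dot n (ep1 a)) in *. set (n2 := dot n (ep2 a)) in *.
  set (w1 := dot w (ep1 a)) in *. set (w2 := dot w (ep2 a)) in *.
  destruct (Rlt_or_le n1 0) as [c1|c1].
  - assert (c2 : 0 < n2) by nra.
    assert (ht : n1 * n2 < 0) by nra.
    specialize (Ht ht). rewrite (Rabs_left n1), (Rabs_right n2) in Ht by lra.
    specialize (K2 (Rlt_le _ _ c2)).
    assert (I : al * (n2 * w1 + - n1 * w2) = - w2 * (al * n1 + be * n2)).
    { assert (HH : al * w1 = - (be * w2)) by lra.
      replace (al * (n2 * w1 + - n1 * w2)) with (n2 * (al * w1) - n1 * al * w2) by ring.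
      rewrite HH. ring. }
    assert (al * (n2 * w1 + - n1 * w2) <= 0) by nra.
    assert (w2 = 0) by nra.
    assert (w1 = 0) by nra. split; assumption.
  - specialize (K1 c1).
    destruct (Rlt_or_le n2 0) as [c2|c2].
    + assert (c1' : 0 < n1) by nra.
      assert (ht : n1 * n2 < 0) by nra.
      specialize (Ht ht). rewrite (Rabs_right n1), (Rabs_left n2) in Ht by lra.
      assert (I : be * (- n2 * w1 + n1 * w2) = - w1 * (al * n1 + be * n2)).
      { assert (HH : be * w2 = - (al * w1)) by lra.
        replace (be * (- n2 * w1 + n1 * w2)) with (- n2 * be * w1 + n1 * (be * w2)) by ring.
        rewrite HH. ring. }
      assert (be * (- n2 * w1 + n1 * w2) <= 0) by nra.
      assert (w1 = 0) by nra.
      assert (w2 = 0) by nra. split; assumption.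
    + specialize (K2 c2). split; nra.
Qed.

Lemma list_max (l : list V3) (P : V3 -> Prop) (Fn : V3 -> R) :
  (exists x, In x l /\ P x) -> exists p, In p l /\ P p /\ forall q, In q l -> P q -> Fn q <= Fn p.
Proof.
  induction l as [|x l IH]; intros [y [hy hPy]]; [destruct hy|].
  destruct (classic (exists z, In z l /\ P z)) as [ex|nex].
  - destruct (IH ex) as [p [hp [hPp hmax]]].
    destruct (classic (P x /\ Fn p < Fn x)) as [[hPx hlt]|hn].
    + exists x. split; [left; auto|]. split; auto.
      intros q [E|hq] hPq; [subst; lra|]. specialize (hmax q hq hPq). lra.
    + exists p. split; [right; auto|]. split; auto.
      intros q [E|hq] hPq; [|auto]. subst q.
      destruct (Rle_dec (Fn x) (Fn p)); auto. exfalso; apply hn; split; auto; lra.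
  - destruct hy as [E|hy]; [|exfalso; apply nex; eauto]. subst y.
    exists x. split; [left; auto|]. split; auto.
    intros q [E|hq] hPq; [subst; lra|]. exfalso; apply nex; eauto.
Qed.

Definition EPs (D : list arc) : list V3 := flat_map (fun b => ep1 b :: ep2 b :: nil) D.

Lemma EPs_iff D q : In q (EPs D) <-> isEP D q.
Proof.
  unfold EPs, isEP. rewrite in_flat_map. split.
  - intros [b [hb hq]]. exists b. split; auto. simpl in hq. intuition.
  - intros [b [hb hq]]. exists b. split; auto. simpl. intuition.
Qed.

Lemma core D n m : spherical_diagram D ->
  (exists q, isEP D q /\ 0 < dot n q) ->
  m <> vzero -> dot m n = 0 ->
  (forall a, In a D -> trans n a -> dot m (cdir n a) <= 0) -> False.
Proof.
  intros HD hex hm hmn Htr.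
  destruct (list_max (EPs D) (fun q => 0 < dot n q) (fun q => dot m q / dot n q)) as [p [hp [hnp hmax]]].
  { destruct hex as [q [h1 h2]]. exists q. split; auto. apply EPs_iff; auto. }
  apply EPs_iff in hp.
  assert (hn : n <> vzero).
  { intro E; subst n. unfold dot, vzero in hnp; simpl in hnp. lra. }
  set (M := dot m p / dot n p).
  set (w := vsub m (vscale M n)).
  assert (Htrw : forall a, In a D -> trans n a -> dot w (cdir n a) <= 0).
  { intros a ha ht. unfold w. autorewrite with dotdb. rewrite n_cdir by auto.
    specialize (Htr a ha ht). lra. }
  assert (HEP : forall q, isEP D q -> 0 <= dot n q -> dot w q <= 0).
  { intros q hq hnq. destruct hnq as [hnq|hnq].
    - specialize (hmax q (proj2 (EPs_iff D q) hq) hnq). simpl in hmax. fold M in hmax.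
      unfold w. autorewrite with dotdb.
      assert (dot m q <= M * dot n q).
      { apply (Rmult_le_reg_r (/ dot n q)). apply Rinv_0_lt_compat; lra.
        replace (M * dot n q * / dot n q) with M by (field; lra).
        exact hmax. }
      lra.
    - apply (G D n w q HD hn Htrw hq). auto. }
  assert (hwp : dot w p = 0).
  { unfold w, M. autorewrite with dotdb. field. lra. }
  assert (hw : w <> vzero).
  { intro E. assert (dot w w = 0) by (rewrite E; unfold dot, vzero; simpl; ring).
    unfold w in H. autorewrite with dotdb in H. rewrite (dot_comm n m), hmn in H.
    pose proof (dot_self_pos m hm). pose proof (dot_self_nonneg n).
    assert (0 <= M * (M * dot n n)) by (pose proof (sq_nonneg M); nra).
    lra. }
  destruct (blocked D p HD hp) as [a [ha hrel]].
  destruct (claim D n w a p HD Htrw HEP ha hrel hnp hwp) as [wa1 wa2].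
  assert (hex2 : exists e, (e = ep1 a \/ e = ep2 a) /\ 0 < dot n e).
  { destruct hrel as [_ [al [be [hal [hbe Eq]]]]].
    subst p. autorewrite with dotdb in hnp.
    destruct (Rlt_or_le 0 (dot n (ep1 a))) as [c|c]; [exists (ep1 a); auto|].
    destruct (Rlt_or_le 0 (dot n (ep2 a))) as [c'|c']; [exists (ep2 a); auto|].
    exfalso. nra. }
  destruct hex2 as [e [he hne]].
  assert (hwe : dot w e = 0) by (destruct he; subst; auto).
  assert (hepe : isEP D e) by (exists a; auto).
  destruct (blocked D e HD hepe) as [a' [ha' hrel']].
  destruct (claim D n w a' e HD Htrw HEP ha' hrel' hne hwe) as [wb1 wb2].
  apply (overlap D a' a w HD ha' ha hw wb1 wb2 wa1 wa2).
  destruct he; subst; auto.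
Qed.

Definition ypt (x d : V3) (K t : R) : V3 :=
  vscale (/ (1 + K * (t * t))) (vadd (vscale (1 - K * (t * t)) x) (vscale (2 * t) d)).

Lemma div_neg a b : a < 0 -> 0 < b -> a / b < 0.
Proof.
  intros ha hb. replace (a / b) with (- ((- a) / b)) by (field; lra).
  assert (0 < (- a) / b) by (apply Rdiv_lt_0_compat; lra). lra.
Qed.

Lemma ypath x d n W K s t : dot x x = 1 -> dot x d = 0 -> dot d d = K -> 0 < K ->
  dot n x = 0 -> dot n d = 0 -> dot W x = 0 -> dot W d = s ->
  on_gc n (ypt x d K t) /\ dot W (ypt x d K t) = 2 * t * s / (1 + K * (t * t)) /\
  dot (vsub (ypt x d K t) x) (vsub (ypt x d K t) x) = 4 * K * (t * t) / (1 + K * (t * t)).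
Proof.
  intros hxx hxd hdd hK hnx hnd hWx hWd.
  assert (hdx : dot d x = 0) by (rewrite dot_comm; auto).
  assert (hp : 0 < 1 + K * (t * t)) by (pose proof (sq_nonneg t); nra).
  unfold ypt, on_gc, on_sphere. split; [split|split].
  - autorewrite with dotdb. rewrite hxx, hxd, hdd, hdx. field. lra.
  - autorewrite with dotdb. rewrite hnx, hnd. ring.
  - autorewrite with dotdb. rewrite hWx, hWd. field. lra.
  - autorewrite with dotdb. rewrite hxx, hxd, hdd, hdx. field. lra.
Qed.

Lemma dist_small K eps t : 0 < K -> 0 < eps -> t * t = (eps / (2 * (K + 1))) * (eps / (2 * (K + 1))) ->
  sqrt (4 * K * (t * t) / (1 + K * (t * t))) < eps.
Proof.
  intros hK he ht.
  set (tau := eps / (2 * (K + 1))) in *.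
  assert (htau : 2 * (K + 1) * tau = eps) by (unfold tau; field; lra).
  assert (htt : 0 <= t * t) by apply sq_nonneg.
  assert (hp : 0 < 1 + K * (t * t)) by nra.
  set (Z := 4 * K * (t * t) / (1 + K * (t * t))).
  assert (hZ : Z * (1 + K * (t * t)) = 4 * K * (t * t)) by (unfold Z; field; lra).
  assert (hZ0 : 0 <= Z) by (unfold Z; apply Rmult_le_pos; [nra| left; apply Rinv_0_lt_compat; lra]).
  assert (hZ1 : Z <= 4 * K * (t * t)) by nra.
  assert (hZ2 : 4 * K * (t * t) < eps * eps).
  { rewrite ht, <- htau. assert (0 < tau) by (unfold tau; apply Rdiv_lt_0_compat; lra).
    assert (0 < tau * tau) by nra. nra. }
  rewrite <- (sqrt_square eps) by lra.
  apply sqrt_lt_1_alt. lra.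
Qed.

Lemma trans_crosses a n : valid_arc a -> n <> vzero -> trans n a -> crosses a n.
Proof.
  intros hv hn ht.
  pose proof (valid_k a hv) as hk.
  pose proof hv as [h1 [h2 _]]. unfold on_sphere in h1, h2.
  pose proof (n_cdir n a ht) as hnc.
  unfold trans in ht.
  set (e1 := ep1 a) in *. set (e2 := ep2 a) in *.
  set (n1 := dot n e1) in *. set (n2 := dot n e2) in *.
  set (k := dot e1 e2) in *.
  assert (hA : 0 < Rabs n2) by (apply Rabs_pos_lt; intro z; rewrite z in ht; rewrite ?Rmult_0_r, ?Rmult_0_l in ht; lra).
  assert (hB : 0 < Rabs n1) by (apply Rabs_pos_lt; intro z; rewrite z in ht; rewrite ?Rmult_0_r, ?Rmult_0_l in ht; lra).
  set (A := Rabs n2) in *. set (B := Rabs n1) in *.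
  assert (hc : cdir n a = vadd (vscale A e1) (vscale B e2)) by reflexivity.
  rewrite hc in hnc. autorewrite with dotdb in hnc. fold n1 n2 in hnc.
  set (c := vadd (vscale A e1) (vscale B e2)) in *.
  assert (hcc : 0 < dot c c) by (apply comb_pos; [exact h1|exact h2|apply hk|exact hA|exact hB]).
  set (s := sqrt (dot c c)).
  assert (hs : 0 < s) by (apply sqrt_lt_R0; lra).
  assert (hss : s * s = dot c c) by (apply sqrt_sqrt; lra).
  set (x := vscale (/ s) c).
  assert (hxx : dot x x = 1) by (unfold x; autorewrite with dotdb; rewrite <- hss; field; lra).
  assert (hnx : dot n x = 0) by (unfold x; autorewrite with dotdb; unfold c; autorewrite with dotdb; fold n1 n2; rewrite hnc; ring).
  assert (hxe : x = vadd (vscale (A / s) e1) (vscale (B / s) e2)).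
  { unfold x, c. apply veq; unfold vadd, vscale; simpl; field; lra. }
  exists x. split; [|split; [|split]].
  - split; [exact hxx|]. exists (A / s), (B / s).
    split; [apply Rdiv_lt_0_compat; lra|]. split; [apply Rdiv_lt_0_compat; lra|]. exact hxe.
  - split; [exact hxx|exact hnx].
  - exists 1. split; [lra|].
    intros y [hy [al [be [hal [hbe Ey]]]]] [_ hny] _.
    unfold on_sphere in hy.
    rewrite Ey in hny. autorewrite with dotdb in hny. fold e1 e2 n1 n2 in hny.
    assert (hn2 : n2 <> 0) by (intro z; rewrite z in ht; rewrite ?Rmult_0_r, ?Rmult_0_l in ht; lra).
    assert (hab : al * B = be * A).
    { apply (Rmult_eq_reg_r n2); [|exact hn2].
      assert (HH : A * n1 = - (B * n2)) by lra.
      assert (HH2 : al * n1 = - (be * n2)) by lra.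
      replace (al * B * n2) with (- (al * (A * n1)) * / A * A) by (rewrite HH; field; lra).
      replace (be * A * n2) with (- (A * (al * n1)) * / A * A) by (rewrite HH2; field; lra).
      field. lra. }
    set (lam := al / A).
    assert (hal' : al = lam * A) by (unfold lam; field; lra).
    assert (hbe' : be = lam * B).
    { unfold lam. apply (Rmult_eq_reg_r A); [|lra]. replace (al / A * B * A) with (al * B) by (field; lra). lra. }
    assert (hyc : y = vscale lam c).
    { rewrite Ey. unfold c, e1, e2. apply veq; unfold vadd, vscale; simpl; rewrite hal', hbe'; ring. }
    assert (hlam0 : 0 <= lam) by (unfold lam; apply Rmult_le_pos; [lra | left; apply Rinv_0_lt_compat; lra]).
    assert (hls : lam * s = 1).
    { rewrite hyc in hy. autorewrite with dotdb in hy. rewrite <- hss in hy.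
      assert (0 <= lam * s) by nra.
      assert ((lam * s - 1) * (lam * s + 1) = 0) by nra.
      destruct (Rmult_integral _ _ H0); lra. }
    rewrite hyc. unfold x. f_equal. apply (Rmult_eq_reg_r s); [|lra]. rewrite hls. field. lra.
  - intros eps heps.
    set (K := dot n n).
    assert (hK : 0 < K) by (apply dot_self_pos; auto).
    set (d := cross n x).
    set (W := cross e1 e2).
    assert (hdd : dot d d = K) by (unfold d; rewrite lagrange, hxx, hnx; fold K; ring).
    assert (hxd : dot x d = 0) by (unfold d; rewrite dot_comm; apply cross_perp_r).
    assert (hnd : dot n d = 0) by (unfold d; rewrite dot_comm; apply cross_perp_l).
    assert (hWx : dot W x = 0).
    { rewrite hxe. autorewrite with dotdb. unfold W. rewrite cross_perp_l, cross_perp_r. ring. }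
    set (sg := dot W d).
    assert (hsg : sg <> 0).
    { unfold sg, W, d. rewrite binet. rewrite hxe. autorewrite with dotdb.
      rewrite h1, h2, !(dot_comm e2 e1), (dot_comm e1 n), (dot_comm e2 n). fold n1 n2 k.
      assert (hQ : 0 < n1 * n1 - 2 * n1 * n2 * k + n2 * n2).
      { assert (0 < n2 * n2) by nra. pose proof (sq_nonneg (n1 - n2 * k)).
        assert (0 < 1 - k * k) by nra. nra. }
      destruct (prod_neg_cases _ _ ht) as [[p q]|[p q]].
      - unfold A, B. rewrite (Rabs_right n1), (Rabs_left n2) by lra.
        intro E. apply (Rmult_eq_compat_l s) in E.
        replace (s * (n1 * (- n2 / s * k + n1 / s * 1) - (- n2 / s * 1 + n1 / s * k) * n2))
          with (n1 * n1 - 2 * n1 * n2 * k + n2 * n2) in E by (field; lra). lra.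
      - unfold A, B. rewrite (Rabs_left n1), (Rabs_right n2) by lra.
        intro E. apply (Rmult_eq_compat_l s) in E.
        replace (s * (n1 * (n2 / s * k + - n1 / s * 1) - (n2 / s * 1 + - n1 / s * k) * n2))
          with (- (n1 * n1 - 2 * n1 * n2 * k + n2 * n2)) in E by (field; lra). lra. }
    set (tau := eps / (2 * (K + 1))).
    assert (htau : 0 < tau) by (unfold tau; apply Rdiv_lt_0_compat; lra).
    destruct (ypath x d n W K sg tau hxx hxd hdd hK hnx hnd hWx eq_refl) as [gp [Wp Dp]].
    destruct (ypath x d n W K sg (- tau) hxx hxd hdd hK hnx hnd hWx eq_refl) as [gm [Wm Dm]].
    assert (dp : Defs.dist (ypt x d K tau) x < eps).
    { unfold Defs.dist. rewrite Dp. apply dist_small; auto. }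
    assert (dm : Defs.dist (ypt x d K (- tau)) x < eps).
    { unfold Defs.dist. rewrite Dm. apply dist_small; auto. unfold tau. ring. }
    assert (hp1 : 0 < 1 + K * (tau * tau)) by (pose proof (sq_nonneg tau); nra).
    assert (hp2 : 0 < 1 + K * (- tau * - tau)) by (pose proof (sq_nonneg tau); nra).
    fold W.
    assert (hsp : 0 < 2 * tau * sg / (1 + K * (tau * tau)) \/ 2 * tau * sg / (1 + K * (tau * tau)) < 0).
    { destruct (Rlt_or_le 0 sg) as [pos|neg].
      - left. apply Rdiv_lt_0_compat; nra.
      - right. assert (sg < 0) by lra. apply (div_neg); nra. }
    assert (hsm : 2 * - tau * sg / (1 + K * (- tau * - tau)) = - (2 * tau * sg / (1 + K * (tau * tau)))).
    { field. lra. }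
    rewrite hsm in Wm. change (cross (ep1 a) (ep2 a)) with W.
    destruct hsp as [pos|neg].
    + split.
      * exists (ypt x d K tau). split; auto. split; auto. rewrite Wp. lra.
      * exists (ypt x d K (- tau)). split; auto. split; auto. rewrite Wm. lra.
    + split.
      * exists (ypt x d K (- tau)). split; auto. split; auto. rewrite Wm. lra.
      * exists (ypt x d K tau). split; auto. split; auto. rewrite Wp. lra.
Qed.

Lemma cdir_pos n a : valid_arc a -> trans n a -> 0 < dot (cdir n a) (cdir n a).
Proof.
  intros hv ht. pose proof (valid_k a hv) as hk. destruct hv as [h1 [h2 _]].
  unfold trans in ht. unfold cdir. apply comb_pos; auto; [apply hk| |];
  apply Rabs_pos_lt; intro z; rewrite z in ht; rewrite ?Rmult_0_r, ?Rmult_0_l in ht; lra.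
Qed.

Lemma perp2 n c1 c2 : n <> vzero -> 0 < dot c1 c1 -> dot n c1 = 0 ->
  exists m, m <> vzero /\ dot m n = 0 /\ dot m c1 = 0 /\ dot m c2 <= 0.
Proof.
  intros hn hc hnc.
  set (m0 := cross n c1).
  assert (hm0 : m0 <> vzero).
  { intro E. assert (dot m0 m0 = 0) by (rewrite E; unfold dot, vzero; simpl; ring).
    unfold m0 in H. rewrite lagrange, hnc in H. pose proof (dot_self_pos n hn). nra. }
  assert (h1 : dot m0 n = 0) by apply cross_perp_l.
  assert (h2 : dot m0 c1 = 0) by apply cross_perp_r.
  destruct (Rle_dec (dot m0 c2) 0) as [l|l].
  - exists m0; auto.
  - exists (vopp m0). split; [|split; [|split]].
    + intro E. apply hm0. destruct m0; unfold vopp, vzero in *; injection E; intros; apply veq; simpl; lra.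
    + rewrite dot_vopp_l, h1; ring.
    + rewrite dot_vopp_l, h2; ring.
    + rewrite dot_vopp_l; lra.
Qed.

Lemma exists_perp n : n <> vzero -> exists m, m <> vzero /\ dot m n = 0.
Proof.
  intro hn. destruct n as [a b c].
  destruct (classic (a = 0 /\ b = 0)) as [[za zb]|nz].
  - exists (mkV 1 0 0). split.
    + intro E; injection E; intros; lra.
    + unfold dot; simpl. subst; ring.
  - exists (mkV (- b) a 0). split.
    + intro E; injection E; intros; apply nz; split; lra.
    + unfold dot; simpl; ring.
Qed.

Lemma exists_m D n : spherical_diagram D -> n <> vzero ->
  ~ (exists a1 a2 a3, In a1 D /\ In a2 D /\ In a3 D /\ a1 <> a2 /\ a1 <> a3 /\ a2 <> a3 /\
       trans n a1 /\ trans n a2 /\ trans n a3) ->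
  exists m, m <> vzero /\ dot m n = 0 /\ forall a, In a D -> trans n a -> dot m (cdir n a) <= 0.
Proof.
  intros HD hn N.
  destruct HD as [_ [Hval _]].
  destruct (classic (exists t1, In t1 D /\ trans n t1)) as [[t1 [h1 ht1]]|no].
  - pose proof (cdir_pos n t1 (Hval t1 h1) ht1) as hc1.
    pose proof (n_cdir n t1 ht1) as hn1.
    destruct (classic (exists t2, In t2 D /\ trans n t2 /\ t2 <> t1)) as [[t2 [h2 [ht2 ne]]]|no2].
    + destruct (perp2 n (cdir n t1) (cdir n t2) hn hc1 hn1) as [m [hm [hmn [hm1 hm2]]]].
      exists m. split; auto. split; auto.
      intros t ht htt.
      destruct (classic (t = t1)) as [e|e]; [subst; lra|].
      destruct (classic (t = t2)) as [e'|e']; [subst; lra|].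
      exfalso. apply N. exists t1, t2, t. repeat split; auto.
    + destruct (perp2 n (cdir n t1) (cdir n t1) hn hc1 hn1) as [m [hm [hmn [hm1 hm2]]]].
      exists m. split; auto. split; auto.
      intros t ht htt.
      destruct (classic (t = t1)) as [e|e]; [subst; lra|].
      exfalso. apply no2. exists t; auto.
  - destruct (exists_perp n hn) as [m [hm hmn]]. exists m. split; auto. split; auto.
    intros t ht htt. exfalso; apply no; eauto.
Qed.

Theorem mainTheorem17 (D : list arc) (HD : spherical_diagram D) (n : V3) (Hn : n <> vzero) :
  exists a1 a2 a3, In a1 D /\ In a2 D /\ In a3 D /\
    a1 <> a2 /\ a1 <> a3 /\ a2 <> a3 /\
    crosses a1 n /\ crosses a2 n /\ crosses a3 n.
Proof.
  pose proof HD as [HDn [Hval _]].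
  destruct (classic (exists a1 a2 a3, In a1 D /\ In a2 D /\ In a3 D /\ a1 <> a2 /\ a1 <> a3 /\ a2 <> a3 /\
       trans n a1 /\ trans n a2 /\ trans n a3)) as [[a1 [a2 [a3 [i1 [i2 [i3 [d1 [d2 [d3 [t1 [t2 t3]]]]]]]]]]]|N].
  - exists a1, a2, a3. repeat split; auto; apply trans_crosses; auto.
  - exfalso.
    destruct (exists_m D n HD Hn N) as [m [hm [hmn Htr]]].
    destruct (classic (exists q, isEP D q /\ 0 < dot n q)) as [ex|nex].
    + exact (core D n m HD ex hm hmn Htr).
    + destruct (classic (exists q, isEP D q /\ 0 < dot (vopp n) q)) as [ex2|nex2].
      * apply (core D (vopp n) m HD ex2 hm).
        -- rewrite dot_vopp_r, hmn; ring.
        -- intros a ha ht.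
           assert (ht' : trans n a) by (unfold trans in *; rewrite !dot_vopp_l in ht; lra).
           assert (E : cdir (vopp n) a = cdir n a) by (unfold cdir; rewrite !dot_vopp_l, !Rabs_Ropp; reflexivity).
           rewrite E. auto.
      * assert (Z : forall q, isEP D q -> dot n q = 0).
        { intros q hq. destruct (Rtotal_order (dot n q) 0) as [l|[e|g]]; auto.
          - exfalso; apply nex2. exists q. split; auto. rewrite dot_vopp_l. lra.
          - exfalso; apply nex. eauto. }
        destruct D as [|b D']; [contradiction|].
        assert (hb : In b (b :: D')) by (left; auto).
        assert (he : isEP (b :: D') (ep1 b)) by (exists b; auto).
        destruct (blocked _ _ HD he) as [a [ha hr]].
        apply (overlap (b :: D') a b n HD ha hb Hn).
        -- apply Z; exists a; auto.
        -- apply Z; exists a; auto.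
        -- apply Z; exists b; auto.
        -- apply Z; exists b; auto.
        -- left; exact hr.
Qed.
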